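(* Let $d\ge1$, let $\{\zeta_i\}_{i=0}^d$ be any scalars, and let $P(x)=\sum_{i=0}^d\frac{(-1)^i\zeta_ix^i}{([i]^!_q)^2}$ be the corresponding Drinfel'd polynomial. Put $\theta_i=q^{2i-d}$ and $\theta^*_i=q^{d-2i}$ for $0\le i\le d$. Then $$\sum_{i=0}^d\eta_{d-i}(\theta_0)\,\eta^*_{d-i}(\theta^*_0)\,\zeta_i=(-1)^d([d]^!_q)^2(q-q^{-1})^{2d}\,P\!\left(\frac{1}{(q-q^{-1})^2}\right).$$
   Context: $\mathcal K$ is a field; $q\in\mathcal K$ is nonzero and not a root of unity; $[i]_q=\frac{q^i-q^{-i}}{q-q^{-1}}$, $[i]^!_q=\prod_{n=1}^i[n]_q$ ($[0]^!_q=1$). For $0\le i\le d$: $\eta_i(x)=(x-\theta_d)(x-\theta_{d-1})\cdots(x-\theta_{d-i+1})$ and $\eta^*_i(x)=(x-\theta^*_d)(x-\theta^*_{d-1})\cdots(x-\theta^*_{d-i+1})$ (empty product $=1$). *)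

(* Defs.v *)
From mathcomp Require Import all_boot all_order all_algebra.
Set Implicit Arguments. Unset Strict Implicit. Unset Printing Implicit Defensive.
Import Order.TTheory GRing.Theory Num.Theory.
Local Open Scope ring_scope.

Definition qint (K : fieldType) (q : K) (i : nat) : K :=
  (q ^+ i - q ^- i) / (q - q^-1).

Definition qfact (K : fieldType) (q : K) (i : nat) : K :=
  \prod_(1 <= n < i.+1) qint q n.

Definition eta (K : fieldType) (th : nat -> K) (d i : nat) (x : K) : K :=
  \prod_(0 <= k < i) (x - th (d - k)%N).

Definition thetaq (K : fieldType) (q : K) (d i : nat) : K :=
  q ^ ((2 * i)%:Z - d%:Z).
Definition thetaqs (K : fieldType) (q : K) (d i : nat) : K :=
  q ^ (d%:Z - (2 * i)%:Z).

Definition drinfeld_poly (K : fieldType) (q : K) (d : nat) (zeta : nat -> K)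
  : {poly K} :=
  \sum_(i < d.+1) (((-1) ^+ i * zeta i) / (qfact q i) ^+ 2) *: 'X^i.

(* Main.v *)
Require Import Defs.
From mathcomp Require Import all_boot all_order all_algebra.
Import Order.TTheory GRing.Theory Num.Theory.
Local Open Scope ring_scope.
From mathcomp Require Import ring.

Lemma zpow (K : fieldType) (q : K) (a b : nat) : q != 0 ->
  q ^ (a%:Z - b%:Z) = q ^+ a / q ^+ b.
Proof. by move=> hq; rewrite expfzDr // -exprnN -exprnP. Qed.

Lemma factor (K : fieldType) (q : K) (d n : nat) : q != 0 -> (n <= d)%N ->
  (thetaq q d 0 - thetaq q d n) * (thetaqs q d 0 - thetaqs q d n)
  = - (q ^+ n - q ^- n) ^+ 2.
Proof.
move=> hq hn; rewrite /thetaq /thetaqs !zpow // muln0 expr0.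
have hqd : q ^+ d != 0 by rewrite expf_neq0.
have hqn : q ^+ n != 0 by rewrite expf_neq0.
rewrite mul2n -addnn !exprD; move: hqd hqn; generalize (q ^+ d) (q ^+ n) => v u hv hu; field.
by rewrite hv hu oner_eq0.
Qed.

Lemma cqint (K : fieldType) (q : K) n : q - q^-1 != 0 ->
  (q - q^-1) * qint q n = q ^+ n - q ^- n.
Proof. by move=> h; rewrite /qint mulrC divfK. Qed.

Lemma Fstep (K : fieldType) (q : K) (hq0 : q != 0) (c := q - q^-1) (hc : c != 0)
  d m : (m <= d)%N ->
  eta (thetaq q d) d m (thetaq q d 0) * eta (thetaqs q d) d m (thetaqs q d 0)
  * qfact q (d - m) ^+ 2 = (-1) ^+ m * c ^+ (2 * m) * qfact q d ^+ 2.
Proof.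
elim: m => [|m IH] hm.
  by rewrite /eta !big_geq // subn0 !mul1r.
have E : qfact q (d - m) = qfact q (d - m.+1) * qint q (d - m).
  by rewrite /qfact -(subnSK hm) big_nat_recr.
move: (IH (ltnW hm)); rewrite E => {}IH.
rewrite /eta !big_nat_recr //= -/(eta _ _ _ _) -/(eta _ _ _ _).
have := @factor K q d (d - m) hq0 (leq_subr m d) => hf.
rewrite -(@cqint K q (d - m) hc) in hf.
rewrite mulnS exprD exprS.
move: IH hf.
set A := eta _ _ _ _; set B := eta _ _ _ _.
set X := thetaq q d 0 - _; set Y := thetaqs q d 0 - _.
move=> IH hf.
transitivity (A * B * qfact q (d - m.+1) ^+ 2 * (X * Y)); first by ring.
rewrite hf.
transitivity (-(c^+2) * (A * B * (qfact q (d - m.+1) * qint q (d - m)) ^+ 2)).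
  by rewrite /c; ring.
rewrite IH [(-1) ^+ m.+1]exprS; move: (c ^+ (2 * m)) ((-1) ^+ m) (qfact q d ^+ 2) => w s D; ring.
Qed.

Theorem lemma8p2 (K : fieldType) (q : K) (hq0 : q != 0)
  (hq : forall n : nat, (0 < n)%N -> q ^+ n != 1)
  (d : nat) (hd : (1 <= d)%N) (zeta : nat -> K) :
  \sum_(i < d.+1)
     eta (thetaq q d) d (d - i) (thetaq q d 0)
     * eta (thetaqs q d) d (d - i) (thetaqs q d 0) * zeta i
  = (-1) ^+ d * (qfact q d) ^+ 2 * (q - q^-1) ^+ (2 * d)
     * (drinfeld_poly q d zeta).[((q - q^-1) ^+ 2)^-1].
Proof.
have hc : q - q^-1 != 0.
  apply: contra (hq 2%N isT) => /eqP h.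
  have : q * q - q * q^-1 = 0 by rewrite -mulrBr h mulr0.
  by move/eqP; rewrite mulfV // subr_eq0 -expr2.
have hQ : forall i, qfact q i != 0.
  move=> i; rewrite /qfact; rewrite prodf_seq_neq0; apply/allP => n.
  rewrite mem_iota => /andP [h1 _] /=.
  rewrite /qint mulf_neq0 ?invr_eq0 //.
  apply: contra (hq (n + n)%N ltac:(by rewrite addn_gt0 h1)) => /eqP h.
  have hn : q ^+ n != 0 by rewrite expf_neq0.
  have : q ^+ n * q ^+ n - q ^+ n * q ^- n = 0 by rewrite -mulrBr h mulr0.
  by move/eqP; rewrite mulfV // subr_eq0 -exprD.
rewrite /drinfeld_poly horner_sum mulr_sumr; apply: eq_bigr => [[i /=]].
rewrite ltnS => hi _; rewrite hornerZ hornerXn.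
set m := (d - i)%N.
have hm : (m <= d)%N by apply: leq_subr.
have Fi := @Fstep K q hq0 hc d m hm.
rewrite (subKn hi) in Fi.
move: Fi; set F := eta _ _ _ _ * _ => Fi.
have -> : F = (-1) ^+ m * (q - q^-1) ^+ (2 * m) * qfact q d ^+ 2 / qfact q i ^+ 2.
  by rewrite -Fi mulfK // expf_neq0.
have -> : (-1) ^+ d = (-1) ^+ m * (-1) ^+ i :> K by rewrite -exprD subnK.
have -> : (q - q^-1) ^+ (2 * d) = (q - q^-1) ^+ (2 * m) * (q - q^-1) ^+ (2 * i).
  by rewrite -exprD -mulnDr subnK.
have -> : ((q - q^-1) ^+ 2)^-1 ^+ i = ((q - q^-1) ^+ (2 * i))^-1.
  by rewrite exprVn -exprM.
have ht : (-1) ^+ i * (-1) ^+ i = 1 :> K by rewrite -exprD -signr_odd oddD addbb.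
have hW : (q - q^-1) ^+ (2 * i) != 0 by rewrite expf_neq0.
have hQi := hQ i.
move: ht hW hQi.
move: ((-1) ^+ i) ((q - q^-1) ^+ (2 * i)) (qfact q i) ((-1) ^+ m) ((q - q^-1) ^+ (2 * m)) (qfact q d) => t W Q s w D ht hW hQi.
transitivity (s * w * D ^+ 2 / Q ^+ 2 * zeta i * (t * t)); first by rewrite ht mulr1.
field.
by rewrite hW hQi.
Qed.
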